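(* Let $\alpha,\beta$ be real numbers with $\alpha \neq 0$, $\beta \neq 0$, $\beta \neq 1$ and $\alpha \neq \beta$. Let $g(x)=\alpha x(1-x)$ and $h(x)=\beta x(1-x)$, and let $x_\alpha=\frac{\alpha-1}{\alpha}$ and $x_\beta=\frac{\beta-1}{\beta}$ be their nontrivial fixed points. Then the two-point set $\Lambda=\{x_\alpha,x_\beta\}$ is a 2-point toss-and-catch, i.e. $h(x_\alpha)=x_\beta$, $g(x_\beta)=x_\alpha$ and $\Lambda=g(\Lambda)\cup h(\Lambda)$, if and only if $$\alpha=\frac{\beta}{\beta-1}.$$
   Context: For $\gamma\in\mathbb{R}$ let $f_\gamma(x)=\gamma x(1-x)$ denote the logistic map. The logistic IFS is the pair $\{g,h\}=\{f_\alpha,f_\beta\}$, where at each time step $g$ is applied with probability $p\in(0,1)$ and $h$ with probability $1-p$, independently. An invariant set of the IFS is a set $\Lambda$ with $\Lambda=g(\Lambda)\cup h(\Lambda)$; a finite invariant set with $n$ points is called an $n$-point toss-and-catch. In the 2-point toss-and-catch considered here, the fixed point of $g$ is sent by $h$ to the fixed point of $h$ and vice versa. *)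

(* Defs.v *)
From Stdlib Require Import Reals.
Open Scope R_scope.

Definition logistic (gamma x : R) : R := gamma * x * (1 - x).

Definition image (f : R -> R) (A : R -> Prop) : R -> Prop :=
  fun y => exists x, A x /\ y = f x.

Definition setU (A B : R -> Prop) : R -> Prop := fun y => A y \/ B y.

Definition set_eq (A B : R -> Prop) : Prop := forall y, A y <-> B y.

Definition pair_set (a b : R) : R -> Prop := fun y => y = a \/ y = b.

Definition IFS_invariant (g h : R -> R) (L : R -> Prop) : Prop :=
  set_eq L (setU (image g L) (image h L)).

(* Main.v *)
Require Import Defs.
From Stdlib Require Import Reals Lra.
Open Scope R_scope.

Theorem mainTheorem1 (alpha beta : R)
  (ha : alpha <> 0) (hb : beta <> 0) (hb1 : beta <> 1) (hab : alpha <> beta) :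
  let g := logistic alpha in
  let h := logistic beta in
  let xa := (alpha - 1) / alpha in
  let xb := (beta - 1) / beta in
  (h xa = xb /\ g xb = xa /\ IFS_invariant g h (pair_set xa xb))
  <-> alpha = beta / (beta - 1).
Proof.
  intros g h xa xb.
  assert (hb1' : beta - 1 <> 0) by lra.
  assert (hab' : alpha - beta <> 0) by lra.
  split.
  - intros [H _].
    assert (E : (alpha - beta) * (alpha + beta - alpha * beta) = 0).
    { transitivity (alpha*alpha*beta*(h xa - xb)).
      unfold h, xa, xb, logistic; field; auto.
      rewrite H; ring. }
    apply Rmult_integral in E. destruct E as [E|E]; [lra|].
    assert (E2 : alpha * (beta - 1) = beta) by lra.
    apply (Rmult_eq_reg_r (beta - 1)); [|exact hb1'].
    unfold Rdiv; rewrite Rmult_assoc, Rinv_l by exact hb1'. lra.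
  - intros Ha.
    assert (Hxa : xa = 1 / beta).
    { assert (hA : beta / (beta - 1) <> 0) by (rewrite <- Ha; exact ha).
      unfold xa. rewrite Ha. field; repeat split; auto. }
    assert (Hh : h xa = xb).
    { rewrite Hxa. unfold h, xb, logistic. field; repeat split; auto. }
    assert (Hg : g xb = xa).
    { rewrite Hxa. unfold g, xb, logistic. rewrite Ha. field; repeat split; auto. }
    assert (Hgxa : g xa = xa).
    { unfold g, xa, logistic. field; repeat split; auto. }
    assert (Hhxb : h xb = xb).
    { unfold h, xb, logistic. field; repeat split; auto. }
    split; [exact Hh|split; [exact Hg|]].
    intro y; unfold setU, image, pair_set; split.
    + intros [Hy|Hy].
      * left. exists xa. split; [left; reflexivity|]. rewrite Hgxa; exact Hy.
      * right. exists xb. split; [right; reflexivity|]. rewrite Hhxb; exact Hy.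
    + intros [[x [[Hx|Hx] Hy]]|[x [[Hx|Hx] Hy]]]; subst x; subst y.
      * left; exact Hgxa.
      * left; exact Hg.
      * right; exact Hh.
      * right; exact Hhxb.
Qed.
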